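(* Let $f:\mathbb{R}^d\to\mathbb{R}$ be convex and differentiable, $h:\mathbb{R}^d\to\mathbb{R}\cup\{+\infty\}$ proper, closed and convex, $F=f+h$. Let $x\in\mathbb{R}^d$ and $\lambda>0$ be such that $\mathrm{(LS)}(x,\lambda)$ holds, and let $x^+=x-\lambda G^{f}_{\lambda h}(x)$. Then $$F(x^+)\le F(x)-\tfrac{\lambda}{2}\|G^{f}_{\lambda h}(x)\|^2 .$$
   Context: $\mathbb{R}^d$ carries the standard inner product $\langle\cdot,\cdot\rangle$ and Euclidean norm $\|\cdot\|$. For $\lambda>0$ the proximal operator is $\mathrm{prox}_{\lambda h}(w)=\arg\min_{u\in\mathbb{R}^d}\big\{\lambda h(u)+\tfrac12\|u-w\|^2\big\}$. The gradient mapping is $G^{f}_{\lambda h}(x)=\frac{1}{\lambda}\Big(x-\mathrm{prox}_{\lambda h}\big(x-\lambda\nabla f(x)\big)\Big)$. For $x\in\mathbb{R}^d$ and $\lambda>0$, the linesearch condition $\mathrm{(LS)}(x,\lambda)$ is: with $G=G^{f}_{\lambda h}(x)$, $f(x-2\lambda G)\le f(x-\lambda G)-\lambda\langle G,\nabla f(x)\rangle+\tfrac{\lambda}{2}\|G\|^2$. *)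

(* Defs.v *)
From HB Require Import structures.
From mathcomp Require Import all_boot all_order all_algebra.
From mathcomp Require Import all_classical all_reals all_analysis.
Set Implicit Arguments. Unset Strict Implicit. Unset Printing Implicit Defensive.
Import Order.TTheory GRing.Theory Num.Theory.
Import numFieldNormedType.Exports.
Local Open Scope classical_set_scope.
Local Open Scope ring_scope.

Section Defs.
Variables (R : realType) (d : nat).
Notation V := 'rV[R]_d.

Definition inner (u v : V) : R := \sum_(i < d) u ord0 i * v ord0 i.
Definition enorm (u : V) : R := Num.sqrt (inner u u).

Definition grad (f : V -> R) (x : V) : V :=
  \row_(i < d) derive f x (delta_mx ord0 i).

Definition convex_fun (f : V -> R) : Prop :=
  forall (x y : V) (t : R), 0 <= t <= 1 ->
    f (t *: x + (1 - t) *: y) <= t * f x + (1 - t) * f y.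

Definition differentiable_everywhere (f : V -> R) : Prop :=
  forall x : V, differentiable f x.

(* extended-valued h : R^d -> R U {+oo} *)
Definition never_minfty (h : V -> \bar R) : Prop := forall x, h x != -oo%E.
Definition proper_fun (h : V -> \bar R) : Prop :=
  never_minfty h /\ exists x, h x != +oo%E.
(* convexity in the extended sense (t in (0,1); endpoints trivial) *)
Definition convex_efun (h : V -> \bar R) : Prop :=
  forall (x y : V) (t : R), 0 < t < 1 ->
    let z : V := t *: x + (1 - t) *: y in
    (h z <= t%:E * h x + (1 - t)%:E * h y)%E.
(* closed = lower semicontinuous = all sublevel sets closed (Euclidean topology) *)
Definition closed_efun (h : V -> \bar R) : Prop :=
  forall (a : R) (x : V),
    (forall e : R, 0 < e -> exists y : V, enorm (y - x) < e /\ (h y <= a%:E)%E) ->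
    (h x <= a%:E)%E.

Definition prox_obj (lam : R) (h : V -> \bar R) (w u : V) : \bar R :=
  (lam%:E * h u + (2^-1 * enorm (u - w) ^+ 2)%:E)%E.
Definition is_prox (lam : R) (h : V -> \bar R) (w p : V) : Prop :=
  forall u : V, (prox_obj lam h w p <= prox_obj lam h w u)%E.
(* the (unique, when h is proper closed convex) minimizer, chosen classically *)
Definition prox (lam : R) (h : V -> \bar R) (w : V) : V :=
  xget 0 (is_prox lam h w).

Definition grad_map (f : V -> R) (lam : R) (h : V -> \bar R) (x : V) : V :=
  lam^-1 *: (x - prox lam h (x - lam *: grad f x)).

Definition LS (f : V -> R) (h : V -> \bar R) (x : V) (lam : R) : Prop :=
  let G := grad_map f lam h x in
  f (x - (2 * lam) *: G) <= f (x - lam *: G) - lam * inner G (grad f x)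
                             + lam / 2 * enorm G ^+ 2.

Definition Fsum (f : V -> R) (h : V -> \bar R) (x : V) : \bar R := ((f x)%:E + h x)%E.
End Defs.

(* Main.v *)
Require Import Defs.
From HB Require Import structures.
From mathcomp Require Import all_boot all_order all_algebra.
From mathcomp Require Import all_classical all_reals all_analysis.
From mathcomp Require Import ring lra zify.
Import Order.TTheory GRing.Theory Num.Theory.
Import numFieldNormedType.Exports.
Local Open Scope classical_set_scope.
Local Open Scope ring_scope.

Section Aux.
Variables (R : realType) (d : nat).
Notation V := 'rV[R]_d.

Lemma inner_ge0 (u : V) : 0 <= inner u u.
Proof. by rewrite /inner; apply: sumr_ge0 => i _; rewrite -expr2 sqr_ge0. Qed.

Lemma enorm_sq (u : V) : enorm u ^+ 2 = inner u u.
Proof. by rewrite /enorm sqr_sqrtr // inner_ge0. Qed.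

Lemma coord_le_enorm (u : V) i : `|u ord0 i| <= enorm u.
Proof.
rewrite -sqrtr_sqr /enorm; apply: ler_wsqrtr; rewrite /inner.
rewrite (bigD1 i) //= -expr2 lerDl; apply: sumr_ge0 => j _; rewrite -expr2 sqr_ge0.
by [].
Qed.

Lemma enorm_small (u : V) e : 0 < e ->
  (forall i, `|u ord0 i| < e / (d.+1)%:R) -> enorm u < e.
Proof.
move=> e0 H.
have dp : 0 < (d.+1)%:R :> R by rewrite ltr0n.
set δ := e / (d.+1)%:R.
have δ0 : 0 < δ by rewrite divr_gt0.
have Hle : inner u u <= d%:R * δ ^+ 2.
  have -> : d%:R * δ ^+ 2 = \sum_(i < d) δ ^+ 2 by rewrite sumr_const card_ord mulr_natl.
  apply: ler_sum => i _; rewrite -expr2 -real_normK ?num_real //.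
  by rewrite lerXn2r ?nnegrE ?normr_ge0 ?ltW //; apply: ltW.
have -> : e = Num.sqrt (e ^+ 2) by rewrite sqrtr_sqr gtr0_norm.
rewrite /enorm ltr_sqrt ?exprn_gt0 //.
apply: (le_lt_trans Hle).
have E : δ * (d.+1)%:R = e by rewrite /δ mulfVK // gt_eqF.
rewrite -E; clearbody δ; rewrite exprMn [X in _ < X]mulrC ltr_pM2r ?exprn_gt0 //.
rewrite -natrX ltr_nat; rewrite expnS expn1; nia.
Qed.

Lemma sq_lb (s t eta : R) : 0 < eta ->
  (1 - eta) * s ^+ 2 + (1 - eta^-1) * t ^+ 2 <= (s + t) ^+ 2.
Proof.
move=> e0.
have -> : (1 - eta) * s ^+ 2 + (1 - eta^-1) * t ^+ 2 =
   (s + t) ^+ 2 - (eta * s + t) ^+ 2 / eta by field; rewrite gt_eqF.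
by rewrite lerBlDr lerDl divr_ge0 ?sqr_ge0 ?ltW.
Qed.

Lemma inner_lb (a b : V) eta : 0 < eta ->
  (1 - eta) * inner a a + (1 - eta^-1) * inner b b <= inner (a + b) (a + b).
Proof.
move=> e0; rewrite /inner !mulr_sumr -big_split /=; apply: ler_sum => i _.
by rewrite !mxE -!expr2; apply: sq_lb.
Qed.

Lemma small_le0 (z k : R) : 0 <= k -> (forall eta, 0 < eta < 1 -> z <= eta * k) -> z <= 0.
Proof.
move=> k0 H; rewrite leNgt; apply/negP => z0.
pose eta := Num.min (2^-1) (z / (2 * (k + 1))).
have e0 : 0 < eta by rewrite lt_min invr_gt0 ltr0n /= divr_gt0 // mulr_gt0 // ltr_wpDl.
have e1 : eta < 1 by rewrite gt_min; apply/orP; left; rewrite invf_lt1 ?ltr1n.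
have := H eta; rewrite e0 e1 => /(_ isT) => Hz.
have : eta * k <= z / (2 * (k + 1)) * k by rewrite ler_wpM2r // ge_min lexx orbT.
have : z / (2 * (k + 1)) * k < z.
  rewrite mulrAC ltr_pdivrMr ?mulr_gt0 ?ltr_wpDl //; nra.
move=> ? ?; lra.
Qed.
End Aux.
Arguments inner_lb {R d}.
Arguments enorm_small {R d}.
Arguments coord_le_enorm {R d}.
Arguments inner_ge0 {R d}.
Arguments enorm_sq {R d}.
Arguments small_le0 {R}.
Section Min.
Variables (R : realType) (d : nat).
Notation V := 'rV[R]_d.

Definition box (x0 : V) (r : R) (u : V) := forall i, `|u ord0 i - x0 ord0 i| <= r.

Lemma min_on_box (g : V -> \bar R) (x0 : V) (r : R) : closed_efun g -> 0 <= r ->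
  exists2 p, box x0 r p & forall u, box x0 r u -> (g p <= g u)%E.
Proof.
move=> gc r0.
pose K := [set v : V | forall i, `[x0 ord0 i - r, x0 ord0 i + r]%classic (v ord0 i)].
have Kc : compact K := @rV_compact R d (fun i => `[x0 ord0 i - r, x0 ord0 i + r]%classic) (fun i => @segment_compact R _ _).
have KE : forall v, K v <-> box x0 r v.
  move=> v; rewrite /K /box; split => H i; have := H i.
    by rewrite /= in_itv /= -ler_distl.
  by rewrite /= in_itv /= -ler_distl.
have bx0 : box x0 r x0 by move=> i; rewrite subrr normr0.
case: (pselect (exists u, box x0 r u /\ g u != +oo%E)) => [[u0 [bu0 gu0]] | Hno]; last first.
  exists x0 => // u bu; have : g u = +oo%E.
    by apply/eqP; apply: contra_notT Hno => H; exists u.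
  by move=> ->; rewrite leey.
pose D := [set c : R | exists u, box x0 r u /\ (g u <= c%:E)%E].
pose B := fun c : R => [set u | box x0 r u /\ (g u <= c%:E)%E].
have D0 : exists c, D c.
  case E: (g u0) => [c| |].
  - by exists c, u0; rewrite E.
  - by rewrite E in gu0.
  - by exists 0, u0; rewrite E leNye.
have FF : Filter (filter_from D B).
  apply: filter_from_filter => // i j Di Dj.
  have [ij|ji] := lerP i j.
    exists i => // u [bu gu]; split; split => //; apply: (le_trans gu); by rewrite lee_fin.
  exists j => // u [bu gu]; split; split => //; apply: (le_trans gu); by rewrite lee_fin ltW.
have PF : ProperFilter (filter_from D B).
  apply: filter_from_proper => i [u [bu gu]]; by exists u.
have FK : filter_from D B K.
  by have [c Dc] := D0; exists c => // u [bu _]; apply/KE.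
have [p [Kp clp]] := Kc _ PF FK.
have key : forall c, D c -> (g p <= c%:E)%E.
  move=> c Dc; apply: gc => e e0.
  have dp : 0 < (d.+1)%:R :> R by rewrite ltr0n.
  have := clp (B c) (ball p (e / (d.+1)%:R)) _ (nbhsx_ballx _ _ _).
  case=> // [| |y [[_ gyc] [_ bpy]]].
  - by exists c.
  - by rewrite divr_gt0.
  exists y; split => //; apply: enorm_small => // i.
  by rewrite !mxE distrC; exact: (bpy ord0 i).
exists p; first by apply/KE.
move=> u bu; case E: (g u) => [c| |].
- by apply: key; exists u; rewrite E.
- by rewrite leey.
- have allc : forall c, (g p <= c%:E)%E by move=> c; apply: key; exists u; rewrite E leNye.
  case E' : (g p) => [c| |].
  + by have := allc (c - 1)%R; rewrite E' lee_fin => Hc; exfalso; lra.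
  + by have := allc 0; rewrite E'.
  + by [].
Qed.
End Min.
Arguments box {R d}.
Arguments min_on_box {R d g}.


Section Prox.
Variables (R : realType) (d : nat).
Notation V := 'rV[R]_d.

Lemma pobj_fin (lam : R) (h : V -> \bar R) w u hu : h u = hu%:E ->
  prox_obj lam h w u = (lam * hu + 2^-1 * enorm (u - w) ^+ 2)%:E.
Proof. by move=> E; rewrite /prox_obj E EFinD EFinM. Qed.

Lemma pobj_inf (lam : R) (h : V -> \bar R) w u : 0 < lam -> h u = +oo%E ->
  prox_obj lam h w u = +oo%E.
Proof.
by move=> l0 E; rewrite /prox_obj E muleC gt0_mulye ?lte_fin // addye.
Qed.

Arguments pobj_fin {lam h w u hu}.
Arguments pobj_inf {lam h w u}.

Lemma pobj_closed (lam : R) (h : V -> \bar R) w : 0 < lam -> never_minfty h ->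
  closed_efun h -> closed_efun (prox_obj lam h w).
Proof.
move=> l0 hn hc a x Hyp.
pose A := inner (x - w) (x - w).
have A0 : 0 <= A by apply: inner_ge0.
have claim : forall eta, 0 < eta < 1 ->
    (h x <= ((a - 2^-1 * (1 - eta) * A + 2^-1 * eta) / lam)%:E)%E.
  move=> eta /andP[e0 e1]; apply: hc => e ep.
  have [y [ye Hy]] := Hyp (Num.min e eta) (ltac:(by rewrite lt_min ep e0)).
  exists y; split; first by apply: (lt_le_trans ye); rewrite ge_min lexx.
  case E: (h y) => [hy| |].
  - move: Hy; rewrite (pobj_fin E) !lee_fin => Hy.
    rewrite ler_pdivlMr // mulrC.
    have Hyx : enorm (y - x) < eta by apply: (lt_le_trans ye); rewrite ge_min lexx orbT.
    have N2 : inner (y - x) (y - x) <= eta ^+ 2.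
      have en0 : 0 <= enorm (y - x) by rewrite /enorm sqrtr_ge0.
      rewrite -enorm_sq; nra.
    have := inner_lb (x - w) (y - x) eta e0.
    have -> : x - w + (y - x) = y - w by rewrite addrC addrA subrK.
    rewrite -/A -(enorm_sq (y - w)) => LB.
    have Hc : (1 - eta^-1) * inner (y - x) (y - x) >= - eta.
      have -> : - eta = (1 - eta^-1) * eta ^+ 2 - eta ^+ 2 by field; rewrite gt_eqF.
      have : (1 - eta^-1) <= 0 by rewrite subr_le0 invf_ge1 // ltW.
      move=> H1; have := ler_wnM2l H1 N2 => H2.
      have : 0 <= eta ^+ 2 by rewrite sqr_ge0.
      lra.
    lra.
  - by move: Hy; rewrite (pobj_inf l0 E).
  - by rewrite leNye.
case E: (h x) => [hx| |]; last by have := hn x; rewrite E.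
- rewrite (pobj_fin E) lee_fin enorm_sq -/A.
  rewrite -subr_le0; apply: (@small_le0 R _ (2^-1 * A + 2^-1)); first by lra.
  move=> eta Heta; have := claim eta Heta; rewrite E lee_fin ler_pdivlMr // => H.
  nra.
- have H2 : (0 < 2^-1 :> R) && (2^-1 < 1 :> R) by rewrite invr_gt0 ltr0n invf_lt1 ?ltr1n.
  by have := claim _ H2; rewrite E leye_eq.
Qed.
End Prox.
Arguments pobj_fin {R d lam h w u hu}.
Arguments pobj_inf {R d lam h w u}.
Arguments pobj_closed {R d lam h}.

Section Exists.
Variables (R : realType) (d : nat).
Notation V := 'rV[R]_d.

Lemma prox_exists (lam : R) (h : V -> \bar R) (w x0 : V) (hx0 : R) :
  0 < lam -> never_minfty h -> closed_efun h -> convex_efun h -> h x0 = hx0%:E ->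
  exists p, is_prox lam h w p.
Proof.
move=> l0 hn hc hcv E0.
have bx0 : forall r, 0 <= r -> box x0 r x0 by move=> r r0 i; rewrite subrr normr0.
have [p1 bp1 minp1] := min_on_box x0 1 hc (@ler01 R).
have := minp1 x0 (bx0 _ (@ler01 R)).
case E1: (h p1) => [M1| |]; last by have := hn p1; rewrite E1.
  2: by rewrite E0 leye_eq.
rewrite E0 lee_fin => M1le.
pose c := hx0 - M1.
have c0 : 0 <= c by rewrite subr_ge0.
have growth : forall u, 1 < enorm (u - x0) ->
    ((hx0 - c * enorm (u - x0))%:E <= h u)%E.
  move=> u r1; set ρ := enorm (u - x0).
  have rp : 0 < ρ by apply: lt_trans r1.
  pose t := ρ^-1.
  have t0 : 0 < t by rewrite invr_gt0.
  have t1 : t < 1 by rewrite invf_lt1.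
  pose v := t *: u + (1 - t) *: x0.
  have bv : box x0 1 v.
    move=> i; have -> : v ord0 i - x0 ord0 i = t * (u ord0 i - x0 ord0 i).
      by rewrite !mxE; ring.
    rewrite normrM gtr0_norm //.
    have := coord_le_enorm (u - x0) i; rewrite !mxE -/ρ => Hi.
    have -> : 1 = t * ρ by rewrite mulVf // gt_eqF.
    by rewrite ler_wpM2l // ltW.
  have := minp1 v bv; rewrite E1 => Mv.
  have := hcv u x0 t; rewrite t0 t1 => /(_ isT) /= Hc.
  case Eu: (h u) => [hu| |]; last by have := hn u; rewrite Eu.
    2: by rewrite leey.
  move: Hc; rewrite Eu E0 -!EFinM -EFinD => Hc.
  have := le_trans Mv Hc; rewrite lee_fin => Hr.
  have := ler_wpM2l (ltW rp) Hr.
  have -> : ρ * (t * hu + (1 - t) * hx0) = hu + (ρ - 1) * hx0.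
    by rewrite /t; field; rewrite gt_eqF.
  move=> H; rewrite lee_fin /c; lra.
pose a := enorm (x0 - w).
have a0 : 0 <= a by rewrite /a /enorm sqrtr_ge0.
pose r0 := 4 * lam * c + 2 * a + 1.
have Lc : 0 <= lam * c by rewrite mulr_ge0 // ltW.
have r01 : 1 <= r0 by rewrite /r0; lra.
have coer : forall u, r0 < enorm (u - x0) ->
    (prox_obj lam h w x0 <= prox_obj lam h w u)%E.
  move=> u ur; set ρ := enorm (u - x0).
  have := growth u (le_lt_trans r01 ur); rewrite -/ρ.
  case Eu: (h u) => [hu| |]; last by have := hn u; rewrite Eu.
    2: by move=> _; rewrite (pobj_inf l0 Eu) leey.
  rewrite lee_fin (pobj_fin Eu) (pobj_fin E0) lee_fin => gu.
  have := inner_lb (u - x0) (x0 - w) (2^-1) ltac:(by rewrite invr_gt0 ltr0n).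
  have -> : u - x0 + (x0 - w) = u - w by rewrite addrA subrK.
  rewrite invrK -!enorm_sq -/ρ -/a => LB.
  have H1 : lam * (hx0 - c * ρ) <= lam * hu by rewrite ler_wpM2l // ltW.
  have rp : 0 <= ρ by rewrite /ρ /enorm sqrtr_ge0.
  have ur' : 4 * (lam * c) + 2 * a + 1 < ρ by move: ur; rewrite /r0 mulrA.
  have P1 : 0 <= (ρ - 4 * (lam * c) - 2 * a) * ρ by rewrite mulr_ge0 //; lra.
  have P2 : 0 <= (ρ - 2 * a) * a by rewrite mulr_ge0 //; lra.
  lra.
have r00 : 0 <= r0 by lra.
have [p bp minp] := min_on_box x0 r0 (pobj_closed w l0 hn hc) r00.
exists p => u.
case: (pselect (box x0 r0 u)) => [bu|nbu]; first exact: minp.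
case: (pselect (exists i, r0 < `|u ord0 i - x0 ord0 i|)) => [[i Hi]|Hn]; last first.
  by exfalso; apply: nbu => i; rewrite leNgt; apply/negP => Hi; apply: Hn; exists i.
apply: (le_trans (minp x0 (bx0 _ r00))); apply: coer.
by apply: (lt_le_trans Hi); have := coord_le_enorm (u - x0) i; rewrite !mxE.
Qed.
End Exists.
Section Inner.
Variables (R : realType) (d : nat).
Notation V := 'rV[R]_d.
Lemma inner_expand (a b : V) (t : R) :
  inner (a + t *: b) (a + t *: b) = inner a a + 2 * t * inner a b + t ^+ 2 * inner b b.
Proof.
rewrite /inner !mulr_sumr -!big_split /=; apply: eq_bigr => i _; rewrite !mxE; ring.
Qed.
End Inner.
Arguments inner_expand {R d}.

Theorem mainTheorem6 (R : realType) (d : nat)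
  (f : 'rV[R]_d -> R) (h : 'rV[R]_d -> \bar R) (x : 'rV[R]_d) (lam : R) :
  convex_fun f -> differentiable_everywhere f ->
  proper_fun h -> closed_efun h -> convex_efun h ->
  0 < lam -> LS f h x lam ->
  let xplus := x - lam *: grad_map f lam h x in
  (Fsum f h xplus <= Fsum f h x - (lam / 2 * enorm (grad_map f lam h x) ^+ 2)%:E)%E.
Proof.
move=> fc _ [hn _] hc hcv l0 LSx; cbv zeta.
move: LSx; rewrite /LS.
set G := grad_map f lam h x.
set g := grad f x.
move=> LSx.
case Ex: (h x) => [hx| |]; last by have := hn x; rewrite Ex.
  2: by rewrite /Fsum Ex addey // -EFinN addye // leey.
set w := x - lam *: g.
set p := prox lam h w.
have Pp : is_prox lam h w p.
  by apply: xgetPex; exact: (@prox_exists _ _ lam h w x hx l0 hn hc hcv Ex).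
have GE : G = lam^-1 *: (x - p) by [].
have xp : x - p = lam *: G.
  by rewrite GE scalerA mulfV ?gt_eqF // scale1r.
have pE : x - lam *: G = p by rewrite -xp opprB addrC subrK.
have pw : p - w = lam *: (g - G).
  by apply/rowP => i; rewrite /w -pE !mxE; ring.
have := Pp x; rewrite (pobj_fin Ex).
case Ep: (h p) => [hp| |]; last by have := hn p; rewrite Ep.
  2: by rewrite (pobj_inf l0 Ep) leye_eq.
rewrite (pobj_fin Ep) lee_fin => _.
(* subgradient inequality *)
pose I := inner (p - w) (x - p).
pose Q := inner (x - p) (x - p).
have key : forall t, 0 < t < 1 -> lam * (hp - hx) - I <= t * (2^-1 * Q).
  move=> t /andP[t0 t1].
  pose ut := t *: x + (1 - t) *: p.
  have := hcv x p t; rewrite t0 t1 => /(_ isT) /=; rewrite -/ut => Hc.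
  have := Pp ut.
  have utw : ut - w = (p - w) + t *: (x - p).
    by apply/rowP => i; rewrite !mxE; ring.
  move: Hc; rewrite Ex Ep -!EFinM -EFinD.
  case Eu: (h ut) => [hu| |]; last by have := hn ut; rewrite Eu.
    2: by rewrite leye_eq.
  rewrite lee_fin (pobj_fin Ep) (pobj_fin Eu) lee_fin utw !enorm_sq inner_expand.
  rewrite -/I -/Q => A2 A1.
  have A3 := ler_wpM2l (ltW l0) A2.
  have : t * (lam * (hp - hx) - I) <= t * (t * (2^-1 * Q)) by lra.
  by rewrite ler_pM2l.
have Q0 : 0 <= 2^-1 * Q by rewrite mulr_ge0 // inner_ge0.
have sub := small_le0 _ _ Q0 key.
have IE : I = lam ^+ 2 * (inner G g - inner G G).
  rewrite /I pw xp /inner -sumrB mulr_sumr.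
  by apply: eq_bigr => i _; rewrite !mxE; ring.
have := fc x (x - (2 * lam) *: G) (2^-1).
rewrite invr_ge0 ler0n invf_le1 ?ltr0n ?ler1n // => /(_ isT).
have -> : 2^-1 *: x + (1 - 2^-1) *: (x - (2 * lam) *: G) = x - lam *: G.
  by apply/rowP => i; rewrite !mxE; field; rewrite gt_eqF.
move=> Hf0.
have Hf : f p <= 2^-1 * f x + (1 - 2^-1) * f (x - (2 * lam) *: G).
  by rewrite -pE; exact: Hf0.
have -> : x - lam *: G = p by exact: pE.
rewrite /Fsum Ep Ex -!EFinD lee_fin.
have LSx' : f (x - (2 * lam) *: G) <= f p - lam * inner G g + lam / 2 * enorm G ^+ 2.
  by rewrite -pE; exact: LSx.
rewrite enorm_sq in LSx' *.
rewrite IE in sub.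
have : lam * (hp - hx) <= lam * (lam * (inner G g - inner G G)) by lra.
rewrite ler_pM2l // => Hh.
lra.
Qed.
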